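(* Let $R>0$ and $\Theta=(\alpha,\rho_r,\rho_d,\rho_s,\rho_0,T)$ with $\alpha>1$, $\rho_r,\rho_d,\rho_s,\rho_0>0$, $T>1$; set $\beta=\rho_d/\rho_r$, $\delta=\rho_s/\rho_r$, $\mu=\rho_0/\rho_r$, $K_{max}(\Theta)=\min\big(\frac T4,\frac1{3\mu},\frac{3\beta}{2\mu}\big)$. Suppose $K_{max}(\Theta)>10$, $\rho_r>\frac{\alpha}{2\delta}$, $\rho_r>\frac{3\alpha}{4(1+\beta)^2R}g^2\big(\frac{4R}{3K_{max}(\Theta)}\big)$ and $\rho_r<\frac{\alpha}{(1+\beta)^2}\frac{g^2(R)}{R}$. Then $$\zeta'_{zf}(R,\Theta)>\frac38\,\zeta'_{csi}\Big(\frac{4R}{3},\Theta\Big)>\frac38\,\zeta'_{csi}(R,\Theta).$$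
   Context: $g(x)=\sqrt{\frac{x}{2^x-1}}\big(2^x x\ln2-2^x+1\big)$, $x>0$. For rate $r>0$ and reals $M>K$, $1\le K\le\tau<T$, $$\gamma_u=\frac{K+\tau}{2\tau(M-K)}\Big(2^{\frac{r}{K(1-\tau/T)}}-1\Big)+\sqrt{\Big(\frac{K+\tau}{2\tau(M-K)}\Big(2^{\frac{r}{K(1-\tau/T)}}-1\Big)\Big)^2+\frac{2^{\frac{r}{K(1-\tau/T)}}-1}{\tau(M-K)}},$$ $$\frac{r}{\zeta_{zf}(M,K,\tau,r,\Theta)}=\alpha K\gamma_u+\rho_s+K\Big(\rho_d+\frac{8K^2\rho_0}{3T}\Big)+M\Big(\rho_r+2K\rho_0+\frac{4K^2\rho_0}{T}\Big).$$ $\zeta'_{zf}(r,\Theta)$ is the supremum of $\zeta_{zf}$ over real $(M,K,\tau)$ with $1\le K\le K_{max}(\Theta)$, $K\le\tau<T$, $M>K$. For real $M>K\ge1$, $\frac{1}{\zeta_{csi}(M,K,r,\Theta)}=\frac1r\big[\frac{\alpha K}{M-K}(2^{r/K}-1)+M\rho_r+K\rho_d+\rho_s\big]$ and $\zeta'_{csi}(r,\Theta)$ is its maximum over real $(M,K)$ with $1\le K\le K_{max}(\Theta)$, $M>K$. *)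

(* Defs.v *)
From Stdlib Require Import Reals.
From Coquelicot Require Import Coquelicot.
Open Scope R_scope.

Definition pow2 (x : R) : R := Rpower 2 x.

Definition g (x : R) : R :=
  sqrt (x / (pow2 x - 1)) * (pow2 x * x * ln 2 - pow2 x + 1).

Record Theta := mkTheta {
  alpha : R; rho_r : R; rho_d : R; rho_s : R; rho_0 : R; TT : R }.

Definition beta (th : Theta) : R := rho_d th / rho_r th.
Definition delta (th : Theta) : R := rho_s th / rho_r th.
Definition mu (th : Theta) : R := rho_0 th / rho_r th.

Definition Kmax (th : Theta) : R :=
  Rmin (TT th / 4) (Rmin (1 / (3 * mu th)) (3 * beta th / (2 * mu th))).

Definition gamma_u (M K tau T r : R) : R :=
  let c := (K + tau) / (2 * tau * (M - K)) * (pow2 (r / (K * (1 - tau / T))) - 1) in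
  c + sqrt (c ^ 2 + (pow2 (r / (K * (1 - tau / T))) - 1) / (tau * (M - K))).

Definition zeta_zf (M K tau r : R) (th : Theta) : R :=
  let T := TT th in
  r / (alpha th * K * gamma_u M K tau T r + rho_s th
       + K * (rho_d th + 8 * K ^ 2 * rho_0 th / (3 * T))
       + M * (rho_r th + 2 * K * rho_0 th + 4 * K ^ 2 * rho_0 th / T)).

Definition zeta_csi (M K r : R) (th : Theta) : R :=
  r / (alpha th * K / (M - K) * (pow2 (r / K) - 1)
       + M * rho_r th + K * rho_d th + rho_s th).

Definition zeta_zf' (r : R) (th : Theta) : Rbar :=
  Lub_Rbar (fun z => exists M K tau,
    1 <= K /\ K <= Kmax th /\ K <= tau /\ tau < TT th /\ M > K /\
    z = zeta_zf M K tau r th).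

(* zeta'_csi : maximum (taken as supremum) over real (M,K), 1<=K<=Kmax, M>K *)
Definition zeta_csi' (r : R) (th : Theta) : Rbar :=
  Lub_Rbar (fun z => exists M K,
    1 <= K /\ K <= Kmax th /\ M > K /\ z = zeta_csi M K r th).

(* Main.v *)
Require Import Defs.
From Stdlib Require Import Reals Lra Psatz.
From Coquelicot Require Import Coquelicot.
Open Scope R_scope.
Notation P2 := Defs.pow2.

Lemma div_lt a b c : 0 < c -> a < b*c -> a/c < b.
Proof. intros. apply Rlt_div_l; lra. Qed.
Lemma div_le a b c : 0 < c -> a <= b*c -> a/c <= b.
Proof. intros. apply Rle_div_l; lra. Qed.
Lemma lt_div a b c : 0 < c -> a*c < b -> a < b/c.
Proof. intros. apply Rlt_div_r; lra. Qed.
Lemma lt_div_inv a b c : 0 < c -> a/c < b -> a < b*c.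
Proof. intros. apply Rlt_div_l; lra. Qed.

Lemma lub_fin (E : R -> Prop) (B z0 : R) :
  E z0 -> (forall z, E z -> z <= B) ->
  exists s, Lub_Rbar E = Finite s /\ z0 <= s /\
    (forall t, t < s -> exists z, E z /\ t < z).
Proof.
  intros H0 HB.
  destruct (Lub_Rbar_correct E) as [Hub Hl].
  assert (HuB : Rbar_le (Lub_Rbar E) B).
  { apply Hl. intros x Hx. simpl. now apply HB. }
  assert (Hz : Rbar_le z0 (Lub_Rbar E)) by (apply Hub; auto).
  destruct (Lub_Rbar E) as [s| |] eqn:Hs; simpl in *; try contradiction.
  exists s; split; [reflexivity|split; [exact Hz|]].
  intros t Ht.
  destruct (Classical_Prop.classic (exists z, E z /\ t < z)) as [h|h]; [exact h|].
  exfalso.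
  assert (Hb : s <= t).
  { apply (Hl (Finite t)). intros x Hx. simpl.
    destruct (Rle_or_lt x t) as [?|Hlt]; auto. exfalso; apply h; eauto. }
  lra.
Qed.

Lemma lub_ge (E : R -> Prop) z : E z -> Rbar_le (Finite z) (Lub_Rbar E).
Proof. intros H. destruct (Lub_Rbar_correct E) as [Hub _]. now apply Hub. Qed.

Lemma sup_compare (E1 E2 : R -> Prop) s k a b :
  Lub_Rbar E1 = Finite s ->
  (forall t, t < s -> exists z, E1 z /\ t < z) ->
  0 < s -> 0 < a -> 0 < b -> 0 < k ->
  (forall z, E1 z -> 0 < z -> exists w, E2 w /\ k*z <= w*(a - b*z) /\ 0 < a - b*z) ->
  Rbar_lt (Finite (k/a*s)) (Lub_Rbar E2).
Proof.
  intros Hs Happ s0 a0 b0 k0 Hp.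
  destruct (Happ (a*s/(a+b*s))) as [z [Hz Hlt]].
  { assert (0 < b*s*s) by (repeat apply Rmult_lt_0_compat; lra). apply div_lt; nra. }
  assert (zp : 0 < z). { assert (0 < a*s/(a+b*s)) by (apply Rdiv_lt_0_compat; nra). lra. }
  destruct (Hp z Hz zp) as [w [Hw [H1 H2]]].
  apply Rbar_lt_le_trans with (Finite w); [|now apply lub_ge].
  simpl.
  apply lt_div_inv in Hlt; [|nra].
  assert (k*s*(a-b*z) < k*z*a) by nra.
  assert (k*s*(a-b*z) < w*(a-b*z)*a) by nra.
  assert (k/a*s*(a-b*z) < w*(a-b*z)).
  { replace (k/a*s*(a-b*z)) with ((k*s*(a-b*z))/a) by (field; lra).
    apply div_lt; lra. }
  nra.
Qed.

Lemma ln2_pos : 0 < ln 2.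
Proof. rewrite <- ln_1. apply ln_increasing; lra. Qed.

Lemma pow2_exp t : P2 t = exp (t * ln 2).
Proof. reflexivity. Qed.

Lemma pow2_ge1 t : 0 <= t -> 1 <= P2 t.
Proof. intros. rewrite pow2_exp. pose proof (exp_ineq1_le (t * ln 2)).
  pose proof ln2_pos. nra. Qed.
Lemma pow2_gt1 t : 0 < t -> 1 < P2 t.
Proof. intros. rewrite pow2_exp. pose proof ln2_pos.
  pose proof (exp_ineq1 (t * ln 2)). assert (0 < t*ln 2) by nra. lra. Qed.

Lemma Kbounds th K : rho_r th > 0 -> rho_d th > 0 -> rho_0 th > 0 ->
  K <= Kmax th -> 4*K <= TT th /\ 3*K*rho_0 th <= rho_r th /\ 2*K*rho_0 th <= 3*rho_d th.
Proof.
  intros hr hd h0 HK. unfold Kmax, mu, beta in HK.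
  pose proof (Rmin_l (TT th / 4) (Rmin (1 / (3 * (rho_0 th / rho_r th)))
     (3 * (rho_d th / rho_r th) / (2 * (rho_0 th / rho_r th))))) as H1.
  pose proof (Rmin_r (TT th / 4) (Rmin (1 / (3 * (rho_0 th / rho_r th)))
     (3 * (rho_d th / rho_r th) / (2 * (rho_0 th / rho_r th))))) as H2.
  pose proof (Rmin_l (1 / (3 * (rho_0 th / rho_r th)))
     (3 * (rho_d th / rho_r th) / (2 * (rho_0 th / rho_r th)))) as H3.
  pose proof (Rmin_r (1 / (3 * (rho_0 th / rho_r th)))
     (3 * (rho_d th / rho_r th) / (2 * (rho_0 th / rho_r th)))) as H4.
  replace (1 / (3 * (rho_0 th / rho_r th))) with (rho_r th / (3*rho_0 th)) in * by (field; lra).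
  replace (3 * (rho_d th / rho_r th) / (2 * (rho_0 th / rho_r th)))
    with (3*rho_d th / (2*rho_0 th)) in * by (field; lra).
  repeat split.
  - lra.
  - assert (K <= rho_r th / (3 * rho_0 th)) by lra.
    apply Rle_div_r in H; lra.
  - assert (K <= 3*rho_d th / (2 * rho_0 th)) by lra.
    apply Rle_div_r in H; lra.
Qed.

Definition Dc th M K r := alpha th * K / (M - K) * (P2 (r / K) - 1)
       + M * rho_r th + K * rho_d th + rho_s th.

Lemma zeta_csi_Dc M K r th : zeta_csi M K r th = r / Dc th M K r.
Proof. reflexivity. Qed.

Lemma Dc_ge th M K r : alpha th > 0 -> rho_r th > 0 -> rho_d th > 0 ->
  1 <= K -> M > K -> 0 <= r -> rho_s th <= Dc th M K r.
Proof.
  intros. unfold Dc.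
  assert (0 <= r/K) by (apply Rdiv_le_0_compat; lra).
  pose proof (pow2_ge1 _ H5).
  assert (0 <= alpha th * K / (M - K)) by (apply Rdiv_le_0_compat; nra).
  nra.
Qed.

Lemma zf_point th R0 M K :
  alpha th > 1 -> rho_r th > 0 -> rho_d th > 0 -> rho_s th > 0 -> rho_0 th > 0 ->
  TT th > 1 -> rho_s th > alpha th / 2 -> R0 > 0 ->
  1 <= K -> K <= Kmax th -> M > K ->
  exists Dz, zeta_zf M K (TT th / 4) R0 th = R0 / Dz /\ 0 < Dz /\
    Dz <= 2 * Dc th M K (4*R0/3) - (rho_s th - alpha th / 2).
Proof.
  intros ha hr hd hs h0 hT hsa hR hK1 hK2 hMK.
  destruct (Kbounds th K hr hd h0 hK2) as [b1 [b2 b3]].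
  unfold zeta_zf, gamma_u, Dc.
  set (T := TT th). fold T in b1.
  replace (R0 / (K * (1 - T / 4 / T))) with (4 * R0 / 3 / K) by (unfold T in *; field; lra).
  set (S := P2 (4 * R0 / 3 / K) - 1).
  assert (hS : 0 <= S).
  { unfold S. assert (0 <= 4*R0/3/K) by (apply Rdiv_le_0_compat; lra).
    pose proof (pow2_ge1 _ H). lra. }
  set (tau := T/4).
  assert (htau : K <= tau) by (unfold tau; lra).
  set (x := S / (M - K)).
  assert (hx : 0 <= x) by (unfold x; apply Rdiv_le_0_compat; lra).
  set (c := (K + tau) / (2 * tau * (M - K)) * S).
  assert (hc0 : 0 <= c).
  { unfold c. apply Rmult_le_pos; [apply Rdiv_le_0_compat|]; nra. }
  assert (hcx : c <= x).
  { unfold c, x. replace ((K + tau) / (2 * tau * (M - K)) * S) with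
      (((K+tau)/(2*tau)) * (S/(M-K))) by (field; lra).
    assert ((K+tau)/(2*tau) <= 1) by (apply div_le; lra).
    assert (0 <= S/(M-K)) by (apply Rdiv_le_0_compat; lra). nra. }
  assert (hq : S / (tau * (M - K)) = x / tau) by (unfold x; field; lra).
  rewrite hq.
  assert (hsq : sqrt (c ^ 2 + x / tau) <= x + 1/(2*tau)).
  { rewrite <- (sqrt_pow2 (x + 1/(2*tau))) by (assert (0 < 1/(2*tau)) by (apply Rdiv_lt_0_compat; lra); lra).
    apply sqrt_le_1_alt.
    replace ((x + 1/(2*tau))^2) with (x^2 + x/tau + 1/(4*tau^2)) by (field; lra).
    assert (0 < 1/(4*tau^2)) by (apply Rdiv_lt_0_compat; nra). nra. }
  assert (hg0 : 0 <= c + sqrt (c ^ 2 + x / tau)) by (pose proof (sqrt_pos (c ^ 2 + x / tau)); lra).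
  assert (hga : alpha th * K * (c + sqrt (c ^ 2 + x / tau)) <= 2 * alpha th * K * x + alpha th / 2).
  { assert (alpha th * K * (c + sqrt (c ^ 2 + x / tau)) <= alpha th * K * (2*x + 1/(2*tau))).
    { apply Rmult_le_compat_l; nra. }
    replace (alpha th * K * (2*x + 1/(2*tau))) with (2 * alpha th * K * x + alpha th * (K/(2*tau))) in H by (field; lra).
    assert (K/(2*tau) <= 1/2) by (apply div_le; lra). nra. }
  assert (hk1 : 8 * K ^ 2 * rho_0 th / (3 * T) <= rho_d th).
  { apply div_le; [lra|].
    assert (4*K*(2*K*rho_0 th) <= T*(3*rho_d th)) by (apply Rmult_le_compat; nra). nra. }
  assert (hk2 : 4 * K ^ 2 * rho_0 th / T <= K * rho_0 th).
  { apply div_le; [lra|].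
    assert (4*K*(K*rho_0 th) <= T*(K*rho_0 th)) by (apply Rmult_le_compat_r; nra). nra. }
  assert (hax : alpha th * K / (M - K) * S = alpha th * K * x) by (unfold x; field; lra).
  rewrite hax.
  eexists; split; [reflexivity|]. split.
  - assert (0 <= K * (rho_d th + 8 * K ^ 2 * rho_0 th / (3 * T))).
    { apply Rmult_le_pos; [lra|]. assert (0 <= 8 * K ^ 2 * rho_0 th / (3 * T)) by (apply Rdiv_le_0_compat; nra). lra. }
    assert (0 <= M * (rho_r th + 2 * K * rho_0 th + 4 * K ^ 2 * rho_0 th / T)).
    { apply Rmult_le_pos; [lra|]. assert (0 <= 4 * K ^ 2 * rho_0 th / T) by (apply Rdiv_le_0_compat; nra). nra. }
    assert (0 <= alpha th * K * (c + sqrt (c ^ 2 + x / tau))) by (apply Rmult_le_pos; nra).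
    lra.
  - assert (K * (rho_d th + 8 * K ^ 2 * rho_0 th / (3 * T)) <= 2 * K * rho_d th) by nra.
    assert (M * (rho_r th + 2 * K * rho_0 th + 4 * K ^ 2 * rho_0 th / T) <= 2 * M * rho_r th) by nra.
    nra.
Qed.

Definition Pf (y : R) := y * (y * exp y - exp y + 1) ^ 2 / (exp y - 1).

Lemma exp_facts y : 0 < y -> 1 + y < exp y /\ 0 < y * exp y - exp y + 1.
Proof.
  intros hy. split; [apply exp_ineq1; lra|].
  pose proof (exp_ineq1_le (-y)).
  assert (exp y * exp (-y) = 1) by (rewrite <- exp_plus; replace (y + - y) with 0 by ring; apply exp_0).
  assert (Hs : 1 - y < exp (-y)) by (pose proof (exp_ineq1 (-y)); lra).
  assert (exp y * (1 - y) < exp y * exp (-y)) by (apply Rmult_lt_compat_l; [apply exp_pos|lra]).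
  lra.
Qed.

Lemma Pf_incr y1 y2 : 0 < y1 -> y1 <= y2 -> Pf y1 <= Pf y2.
Proof.
  intros h1 h2.
  destruct (Rle_lt_or_eq_dec _ _ h2) as [h|h]; [|subst; lra].
  apply Rlt_le.
  apply (incr_function Pf (Finite 0) p_infty
    (fun y => let e := exp y in let u := y*e - e + 1 in
       u * (2*y^2*e*(e-1) - u^2) / (e-1)^2)).
  - intros x hx _. simpl in hx. unfold Pf.
    destruct (exp_facts x hx) as [e1 e2].
    auto_derive.
    + lra.
    + field. lra.
  - intros x hx _. simpl in hx. simpl.
    destruct (exp_facts x hx) as [e1 e2].
    set (e := exp x) in *. set (u := x*e - e + 1) in *.
    apply Rdiv_lt_0_compat; [|nra].
    apply Rmult_lt_0_compat; [lra|].
    assert (u < x*e) by (unfold u; lra).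
    assert (u <= 2*x*(e-1)) by (unfold u; nra).
    assert (u*u < u*(x*e)) by nra.
    assert (u*(x*e) <= 2*x*(e-1)*(x*e)) by (apply Rmult_le_compat_r; nra).
    nra.
  - simpl; lra.
  - exact h.
  - simpl; auto.
Qed.

Lemma ln2_pos' : 0 < ln 2.
Proof. rewrite <- ln_1. apply ln_increasing; lra. Qed.

Definition Phi A rr b r k := 2 * sqrt (A * k * (exp (r / k * ln 2) - 1)) * sqrt rr + k * b.

Lemma Phi_incr A rr b r k1 k2 : 0 < A -> 0 < rr -> 0 < b -> 0 < r -> 0 < k1 -> k1 < k2 ->
  Pf (r / k1 * ln 2) < b^2 * r * ln 2 / (A * rr) ->
  Phi A rr b r k1 < Phi A rr b r k2.
Proof.
  intros hA hr hb hR hk1 hk hP.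
  pose proof ln2_pos' as hL.
  apply (incr_function_le (Phi A rr b r) (Finite k1) (Finite k2)
    (fun k => let y := r / k * ln 2 in let e := exp y in let u := y*e - e + 1 in
       b - A * u * sqrt rr / sqrt (A * k * (e - 1)))).
  - intros k h1 _. simpl in h1. unfold Phi.
    assert (hy : 0 < r / k * ln 2) by (apply Rmult_lt_0_compat; [apply Rdiv_lt_0_compat|]; lra).
    destruct (exp_facts _ hy) as [e1 e2].
    assert (0 < A * k * (exp (r / k * ln 2) - 1)) by (apply Rmult_lt_0_compat; nra).
    auto_derive.
    + repeat split; lra.
    + assert (hs : 0 < sqrt (A * k * (exp (r / k * ln 2) - 1))) by (apply sqrt_lt_R0; lra).
      unfold Rminus, Rdiv in *.
      set (E := exp (r * / k * ln 2)) in *.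
      set (S := sqrt (A * k * (E + - 1))) in *.
      field. lra.
  - intros k h1 _. simpl in h1. cbv zeta.
    set (y := r / k * ln 2).
    assert (hy : 0 < y) by (apply Rmult_lt_0_compat; [apply Rdiv_lt_0_compat|]; lra).
    destruct (exp_facts _ hy) as [e1 e2].
    set (e := exp y) in *. set (u := y*e - e + 1) in *.
    assert (hyy : y <= r / k1 * ln 2).
    { unfold y. apply Rmult_le_compat_r; [lra|]. unfold Rdiv. apply Rmult_le_compat_l; [lra|].
      apply Rinv_le_contravar; lra. }
    pose proof (Pf_incr _ _ hy hyy) as hPy.
    assert (hP2 : Pf y < b^2 * r * ln 2 / (A * rr)) by lra.
    unfold Pf in hP2. fold e u in hP2.
    assert (hkeq : k = r * ln 2 / y) by (unfold y; field; lra).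
    assert (hh : 0 < A * k * (e - 1)) by (apply Rmult_lt_0_compat; nra).
    assert (key : A * rr * (y * u^2) < b^2 * r * ln 2 * (e - 1)).
    { apply (Rmult_lt_compat_r (e-1)) in hP2; [|lra].
      replace (y * u ^ 2 / (e - 1) * (e - 1)) with (y*u^2) in hP2 by (field; lra).
      apply (Rmult_lt_compat_l (A*rr)) in hP2; [|nra].
      replace (A * rr * (b ^ 2 * r * ln 2 / (A * rr) * (e - 1))) with (b^2 * r * ln 2 * (e - 1)) in hP2 by (field; lra).
      lra. }
    assert (key2 : A * rr * u^2 < b^2 * k * (e-1)).
    { rewrite hkeq. apply (Rmult_lt_reg_r y); [lra|].
      replace (b ^ 2 * (r * ln 2 / y) * (e - 1) * y) with (b^2 * r * ln 2 * (e - 1)) by (field; lra).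
      lra. }
    set (sh := sqrt (A * k * (e - 1))).
    assert (hsh : 0 < sh) by (apply sqrt_lt_R0; lra).
    assert (hsh2 : sh * sh = A * k * (e - 1)) by (apply sqrt_sqrt; lra).
    set (sr := sqrt rr).
    assert (hsr : 0 < sr) by (apply sqrt_lt_R0; lra).
    assert (hsr2 : sr * sr = rr) by (apply sqrt_sqrt; lra).
    assert (X : A * u * sr < b * sh).
    { assert ((A*u*sr)*(A*u*sr) < (b*sh)*(b*sh)).
      { replace ((A*u*sr)*(A*u*sr)) with (A * (A * rr * u^2)) by (rewrite <- hsr2; ring).
        assert (E1: (b*sh)*(b*sh) = A*(b^2*k*(e-1))) by (transitivity (b^2*(sh*sh)); [ring| rewrite hsh2; ring]).
        rewrite E1.
        apply Rmult_lt_compat_l; lra. }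
      assert (0 <= A*u*sr) by (apply Rmult_le_pos; nra).
      assert (0 < b*sh) by nra.
      destruct (Rlt_or_le (A*u*sr) (b*sh)) as [?|hc]; [auto|].
      assert ((b*sh)*(b*sh) <= (A*u*sr)*(A*u*sr)) by (apply Rmult_le_compat; lra).
      lra. }
    assert (A * u * sr / sh < b) by (apply Rlt_div_l; lra).
    lra.
  - simpl; lra.
  - exact hk.
  - simpl; lra.
Qed.

Lemma g_sq s : 0 < s -> g s ^ 2 = Pf (s * ln 2) / ln 2.
Proof.
  intros hs. pose proof ln2_pos as hL.
  unfold g, Pf. rewrite pow2_exp.
  assert (hy : 0 < s * ln 2) by nra.
  destruct (exp_facts _ hy) as [e1 e2].
  set (e := exp (s * ln 2)) in *.
  assert (h0 : 0 <= s / (e - 1)) by (apply Rdiv_le_0_compat; lra).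
  pose proof (sqrt_sqrt _ h0) as hq.
  set (q := sqrt (s / (e - 1))) in *.
  replace ((q * (e * s * ln 2 - e + 1)) ^ 2) with ((q*q) * (e * s * ln 2 - e + 1) ^ 2) by ring.
  rewrite hq. field. lra.
Qed.

Lemma scale_Dc th M K R0 : alpha th > 0 -> rho_r th > 0 -> rho_d th > 0 ->
  1 <= K -> M > K -> R0 > 0 ->
  Dc th (4*M/3) (4*K/3) (4*R0/3) <= 4/3 * Dc th M K R0 - rho_s th / 3.
Proof.
  intros. unfold Dc.
  replace (4 * R0 / 3 / (4 * K / 3)) with (R0 / K) by (field; lra).
  replace (alpha th * (4 * K / 3) / (4 * M / 3 - 4 * K / 3)) with (alpha th * K / (M - K)) by (field; lra).
  assert (0 <= R0/K) by (apply Rdiv_le_0_compat; lra).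
  pose proof (pow2_ge1 _ H5).
  assert (0 <= alpha th * K / (M - K)) by (apply Rdiv_le_0_compat; nra).
  nra.
Qed.

Lemma amgm a x rr : 0 <= a -> 0 < x -> 0 < rr -> 2 * sqrt a * sqrt rr <= a / x + x * rr.
Proof.
  intros ha hx hr.
  pose proof (sqrt_sqrt _ ha) as h1. pose proof (sqrt_sqrt rr (Rlt_le _ _ hr)) as h2.
  set (sa := sqrt a) in *. set (sr := sqrt rr) in *.
  replace (a / x + x * rr) with (2 * sa * sr + (sa - x*sr)^2 / x) by (rewrite <- h1, <- h2; field; lra).
  assert (0 <= (sa - x*sr)^2 / x) by (apply Rdiv_le_0_compat; [apply pow2_ge_0|lra]).
  lra.
Qed.

Lemma Dc_ge_Phi th M K r : alpha th > 0 -> rho_r th > 0 -> rho_d th > 0 ->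
  1 <= K -> M > K -> 0 <= r ->
  Phi (alpha th) (rho_r th) (rho_r th + rho_d th) r K + rho_s th <= Dc th M K r.
Proof.
  intros. unfold Phi, Dc. rewrite <- pow2_exp.
  assert (0 <= r/K) by (apply Rdiv_le_0_compat; lra).
  pose proof (pow2_ge1 _ H5).
  assert (0 <= alpha th * K * (P2 (r / K) - 1)) by (apply Rmult_le_pos; nra).
  pose proof (amgm _ (M - K) (rho_r th) H7 ltac:(lra) H0).
  replace (alpha th * K / (M - K) * (P2 (r / K) - 1)) with (alpha th * K * (P2 (r / K) - 1) / (M - K)) by (field; lra).
  nra.
Qed.

Lemma Dc_eq_Phi th K r : alpha th > 0 -> rho_r th > 0 -> rho_d th > 0 ->
  1 <= K -> 0 < r ->
  let x := sqrt (alpha th * K * (P2 (r / K) - 1)) / sqrt (rho_r th) in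
  0 < x /\ Dc th (K + x) K r = Phi (alpha th) (rho_r th) (rho_r th + rho_d th) r K + rho_s th.
Proof.
  intros. unfold Phi, Dc. rewrite <- pow2_exp.
  assert (0 < r/K) by (apply Rdiv_lt_0_compat; lra).
  pose proof (pow2_gt1 _ H4).
  assert (ha : 0 < alpha th * K * (P2 (r / K) - 1)) by (apply Rmult_lt_0_compat; nra).
  pose proof (sqrt_sqrt _ (Rlt_le _ _ ha)) as h1. pose proof (sqrt_sqrt _ (Rlt_le _ _ H0)) as h2.
  pose proof (sqrt_lt_R0 _ ha). pose proof (sqrt_lt_R0 _ H0).
  unfold x. set (sa := sqrt (alpha th * K * (P2 (r / K) - 1))) in *.
  set (sr := sqrt (rho_r th)) in *.
  split; [apply Rdiv_lt_0_compat; lra|].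
  replace (K + sa / sr - K) with (sa/sr) by ring.
  replace (alpha th * K / (sa / sr) * (P2 (r / K) - 1)) with ((alpha th * K * (P2 (r / K) - 1)) * sr / sa) by (field; lra).
  rewrite <- h1, <- h2. field. lra.
Qed.

Lemma csi_point th R0 M K :
  alpha th > 1 -> rho_r th > 0 -> rho_d th > 0 -> rho_s th > 0 -> rho_0 th > 0 ->
  Kmax th > 10 -> R0 > 0 ->
  rho_r th > 3 * alpha th / (4 * (1 + beta th) ^ 2 * R0)
             * (g (4 * R0 / (3 * Kmax th))) ^ 2 ->
  1 <= K -> K <= Kmax th -> M > K ->
  exists M' K', 1 <= K' /\ K' <= Kmax th /\ M' > K' /\
    Dc th M' K' (4*R0/3) <= 4/3 * Dc th M K R0 - rho_s th / 3.
Proof.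
  intros ha hr hd hs h0 hK hR hg hK1 hK2 hMK.
  pose proof (scale_Dc th M K R0 ltac:(lra) hr hd hK1 hMK hR) as hsc.
  destruct (Rle_or_lt K (3 * Kmax th / 4)) as [hA|hB].
  - exists (4*M/3), (4*K/3). split; [lra|split; [lra|split; [lra|exact hsc]]].
  - set (r := 4*R0/3) in *.
    assert (hr0 : 0 < r) by (unfold r; lra).
    destruct (Dc_eq_Phi th (Kmax th) r ltac:(lra) hr hd ltac:(lra) hr0) as [hx heq].
    set (x := sqrt (alpha th * Kmax th * (P2 (r / Kmax th) - 1)) / sqrt (rho_r th)) in *.
    exists (Kmax th + x), (Kmax th). split; [lra|split; [lra|split; [lra|]]].
    rewrite heq.
    pose proof (Dc_ge_Phi th (4*M/3) (4*K/3) r ltac:(lra) hr hd ltac:(lra) ltac:(lra) ltac:(lra)) as hge.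
    assert (hP : Phi (alpha th) (rho_r th) (rho_r th + rho_d th) r (Kmax th)
               < Phi (alpha th) (rho_r th) (rho_r th + rho_d th) r (4*K/3)).
    { apply Phi_incr; try lra.
      pose proof ln2_pos as hL.
      assert (hsp : 0 < 4 * R0 / (3 * Kmax th)) by (apply Rdiv_lt_0_compat; lra).
      rewrite (g_sq _ hsp) in hg.
      replace (r / Kmax th * ln 2) with (4 * R0 / (3 * Kmax th) * ln 2) by (unfold r; field; lra).
      set (Q := Pf (4 * R0 / (3 * Kmax th) * ln 2)) in *.
      unfold beta in hg.
      set (bb := 1 + rho_d th / rho_r th) in *.
      assert (hbb : 0 < bb) by (unfold bb; assert (0 < rho_d th / rho_r th) by (apply Rdiv_lt_0_compat; lra); lra).
      replace (3 * alpha th / (4 * bb ^ 2 * R0) * (Q / ln 2)) with (Q / (4 * bb^2 * R0 * ln 2 / (3 * alpha th))) in hg by (field; repeat split; nra).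
      assert (hc : 0 < 4 * bb^2 * R0 * ln 2 / (3 * alpha th)).
      { apply Rdiv_lt_0_compat; [|lra]. assert (0 < bb^2) by nra. repeat apply Rmult_lt_0_compat; lra. }
      apply lt_div_inv in hg; [|exact hc].
      replace ((rho_r th + rho_d th) ^ 2 * r * ln 2 / (alpha th * rho_r th))
        with (rho_r th * (4 * bb ^ 2 * R0 * ln 2 / (3 * alpha th))) by (unfold r, bb; field; lra).
      exact hg. }
    lra.
Qed.

Lemma csi_lub th r : alpha th > 1 -> rho_r th > 0 -> rho_d th > 0 -> rho_s th > 0 ->
  Kmax th > 10 -> r > 0 ->
  exists s, zeta_csi' r th = Finite s /\ 0 < s /\
    (forall t, t < s -> exists z, (exists M K, 1 <= K /\ K <= Kmax th /\ M > K /\ z = zeta_csi M K r th) /\ t < z).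
Proof.
  intros ha hr hd hs hK hr0.
  destruct (lub_fin (fun z => exists M K, 1 <= K /\ K <= Kmax th /\ M > K /\ z = zeta_csi M K r th)
              (r / rho_s th) (zeta_csi 2 1 r th)) as [s [h1 [h2 h3]]].
  - exists 2, 1. repeat split; lra.
  - intros z [M [K [k1 [k2 [k3 ->]]]]]. rewrite zeta_csi_Dc.
    pose proof (Dc_ge th M K r ltac:(lra) hr hd k1 k3 ltac:(lra)).
    unfold Rdiv. apply Rmult_le_compat_l; [lra|]. apply Rinv_le_contravar; lra.
  - exists s. split; [exact h1|split; [|exact h3]].
    rewrite zeta_csi_Dc in h2.
    pose proof (Dc_ge th 2 1 r ltac:(lra) hr hd ltac:(lra) ltac:(lra) ltac:(lra)).
    assert (0 < r / Dc th 2 1 r) by (apply Rdiv_lt_0_compat; lra). lra.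
Qed.

Theorem lemma7 (Rr : R) (th : Theta) :
  Rr > 0 ->
  alpha th > 1 -> rho_r th > 0 -> rho_d th > 0 -> rho_s th > 0 ->
  rho_0 th > 0 -> TT th > 1 ->
  Kmax th > 10 ->
  rho_r th > alpha th / (2 * delta th) ->
  rho_r th > 3 * alpha th / (4 * (1 + beta th) ^ 2 * Rr)
             * (g (4 * Rr / (3 * Kmax th))) ^ 2 ->
  rho_r th < alpha th / (1 + beta th) ^ 2 * ((g Rr) ^ 2 / Rr) ->
  Rbar_lt (Rbar_mult (Finite (3 / 8)) (zeta_csi' (4 * Rr / 3) th)) (zeta_zf' Rr th) /\
  Rbar_lt (Rbar_mult (Finite (3 / 8)) (zeta_csi' Rr th))
          (Rbar_mult (Finite (3 / 8)) (zeta_csi' (4 * Rr / 3) th)).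
Proof.
  intros hR ha hr hd hs h0 hT hK hdel hg _.
  assert (hsa : rho_s th > alpha th / 2).
  { unfold delta in hdel.
    replace (alpha th / (2 * (rho_s th / rho_r th))) with (rho_r th * (alpha th / (2 * rho_s th))) in hdel by (field; lra).
    assert (alpha th / (2 * rho_s th) < 1) by nra.
    apply Rlt_div_l in H; lra. }
  destruct (csi_lub th (4*Rr/3) ha hr hd hs hK ltac:(lra)) as [s2 [e2 [p2 a2]]].
  destruct (csi_lub th Rr ha hr hd hs hK ltac:(lra)) as [s1 [e1 [p1 a1]]].
  rewrite e1, e2. simpl.
  split.
  - replace (3/8*s2) with (3*Rr/(8*Rr)*s2) by (field; lra).
    unfold zeta_csi' in e2. unfold zeta_zf'.
    apply (sup_compare _ _ s2 (3*Rr) (8*Rr) (3*(rho_s th - alpha th/2)) e2 a2 p2); try lra.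
    intros z [M [K [k1 [k2 [k3 ->]]]]] _.
    destruct (zf_point th Rr M K ha hr hd hs h0 hT hsa hR k1 k2 k3) as [Dz [ez [pz bz]]].
    destruct (Kbounds th K hr hd h0 k2) as [b1 _].
    exists (zeta_zf M K (TT th / 4) Rr th). split.
    + exists M, K, (TT th / 4). repeat split; try lra.
    + rewrite ez, zeta_csi_Dc.
      pose proof (Dc_ge th M K (4*Rr/3) ltac:(lra) hr hd k1 k3 ltac:(lra)) as hD.
      set (D := Dc th M K (4 * Rr / 3)) in *.
      set (ep := rho_s th - alpha th / 2) in *.
      split.
      * replace (3 * Rr * (4 * Rr / 3 / D)) with (4*Rr^2/(D*Dz) * Dz) by (field; lra).
        replace (Rr / Dz * (8 * Rr - 3 * ep * (4 * Rr / 3 / D))) with (4*Rr^2/(D*Dz) * (2*D - ep)) by (field; lra).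
        apply Rmult_le_compat_l; [|lra].
        apply Rlt_le, Rdiv_lt_0_compat; nra.
      * replace (8 * Rr - 3 * ep * (4 * Rr / 3 / D)) with (4*Rr*(2*D - ep)/D) by (field; lra).
        apply Rdiv_lt_0_compat; nra.
  - cut (s1 < s2); [lra|].
    unfold zeta_csi' in e1.
    assert (Hc := sup_compare _ (fun z => exists M K, 1 <= K /\ K <= Kmax th /\ M > K /\ z = zeta_csi M K (4*Rr/3) th) s1 Rr Rr (rho_s th / 4) e1 a1 p1 hR ltac:(lra) hR).
    unfold zeta_csi' in e2. rewrite e2 in Hc. simpl in Hc.
    replace (Rr / Rr * s1) with s1 in Hc by (field; lra).
    apply Hc.
    intros z [M [K [k1 [k2 [k3 ->]]]]] _.
    destruct (csi_point th Rr M K ha hr hd hs h0 hK hR hg k1 k2 k3) as [M' [K' [k1' [k2' [k3' hb]]]]].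
    exists (zeta_csi M' K' (4*Rr/3) th). split.
    + exists M', K'. repeat split; lra.
    + rewrite !zeta_csi_Dc.
      pose proof (Dc_ge th M K Rr ltac:(lra) hr hd k1 k3 ltac:(lra)) as hD.
      pose proof (Dc_ge th M' K' (4*Rr/3) ltac:(lra) hr hd k1' k3' ltac:(lra)) as hD'.
      set (D := Dc th M K Rr) in *. set (D' := Dc th M' K' (4*Rr/3)) in *.
      split.
      * replace (Rr * (Rr / D)) with (Rr^2/(D*D') * D') by (field; lra).
        replace (4 * Rr / 3 / D' * (Rr - rho_s th / 4 * (Rr / D))) with (Rr^2/(D*D') * (4/3*(D - rho_s th/4))) by (field; lra).
        apply Rmult_le_compat_l; [|lra].
        apply Rlt_le, Rdiv_lt_0_compat; nra.
      * replace (Rr - rho_s th / 4 * (Rr / D)) with (Rr*(D - rho_s th/4)/D) by (field; lra).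
        apply Rdiv_lt_0_compat; nra.
Qed.
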